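(* Let $G$ be a group whose abelianization $G_{ab}$ is finitely generated, and let $\bar G=G_{ab}/G_{ab}^{torsion}$. Then there is a generating set $\bar S$ for $\bar G$ and a weight function $\bar f:\bar S\to\mathbb N^+$ such that $\alpha_1(\bar G,L_{\bar G})$ is injective, where $L_{\bar G}$ is the word-length function determined by $\bar f$.
   Context: The word-length function determined by a generating set $\bar S$ and $\bar f:\bar S\to\mathbb N^+$ is $L(g)=\min\{\sum_i\bar f(x_i): g=x_1^{\pm1}\cdots x_r^{\pm1},x_i\in\bar S\}$. For a group $G$ with word-length function $L$, $PH^*(G;\mathbb Q)$ is the cohomology of the subcomplex of the bar cochain complex $\mathrm{Hom}_G(C_*(EG;\mathbb Q),\mathbb Q)$ of $G$-equivariant cochains $\psi$ with $|\psi(1,g_1,\dots,g_n)|\le C(1+\sum_iL(g_i))^k$ for some $C,k$. The inclusion induces $\eta:PH^*(G;\mathbb Q)\to H^*(G;\mathbb Q)$, and $\alpha_*(G,L)$ is the composite $H_*(G;\mathbb Q)\to(H^*(G;\mathbb Q))^*\xrightarrow{\eta^*}(PH^*(G;\mathbb Q))^*$. *)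

(* Defs.v *)
From mathcomp Require Import all_boot all_order all_algebra.
From Stdlib Require Import ClassicalDescription.
Set Implicit Arguments. Unset Strict Implicit. Unset Printing Implicit Defensive.
Import Order.TTheory GRing.Theory Num.Theory.

Section GroupNotions.
Local Open Scope group_scope.
Variable G : groupType.

Definition in_commutator_subgroup (g : G) : Prop :=
  exists ps : seq (G * G),
    g = foldr (fun p acc => [~ p.1, p.2] * acc) 1 ps.

Definition gprod (w : seq G) : G := foldr (fun x acc => x * acc) 1 w.

(* G_ab is finitely generated: there is a finite s whose images in G_ab
   generate G_ab, i.e. every g is, modulo [G,G], a product of elements
   of s and their inverses. *)
Definition abelianization_fg : Prop :=
  exists s : seq G, forall g : G, exists w : seq G,
    all (fun x => (x \in s) || (x^-1 \in s)) w /\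
    in_commutator_subgroup (g / gprod w).

(* g maps to a torsion element of G_ab, i.e. g is in the kernel of
   G -> G_ab -> G_ab / G_ab^{torsion}. *)
Definition torsion_mod_commutator (g : G) : Prop :=
  exists k : nat, (0 < k)%N /\ in_commutator_subgroup (g ^+ k).

End GroupNotions.

(* A realization of  Gbar = G_ab / G_ab^{torsion}: a surjective group
   homomorphism pi : G -> Gbar whose kernel is exactly the preimage of
   the torsion of G_ab. *)
Definition is_Gab_mod_torsion (G Gbar : groupType) (pi : G -> Gbar) : Prop :=
  [/\ (forall x y : G, pi (x * y)%g = (pi x * pi y)%g),
      (forall y : Gbar, exists x : G, pi x = y) &
      (forall x : G, pi x = 1%g <-> torsion_mod_commutator x)].

Section WordLength.
Local Open Scope group_scope.
Variable H : groupType.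
Variable S : H -> Prop.
Variable f : H -> nat.

(* a word: letters x^{+1} (true) or x^{-1} (false) with x in S *)
Definition is_word (w : seq (H * bool)) : Prop := forall p, List.In p w -> S p.1.
Definition word_eval (w : seq (H * bool)) : H :=
  foldr (fun p acc => (if p.2 then p.1 else p.1^-1) * acc) 1 w.
Definition word_weight (w : seq (H * bool)) : nat := sumn (map (fun p => f p.1) w).

Definition generates : Prop := forall g : H, exists w, is_word w /\ word_eval w = g.
Definition positive_weights : Prop := forall s, S s -> (0 < f s)%N.

Definition has_word_of_weight (g : H) (n : nat) : Prop :=
  exists w, [/\ is_word w, word_eval w = g & word_weight w = n].

Definition hwow_b (g : H) : pred nat :=
  fun n => is_left (excluded_middle_informative (has_word_of_weight g n)).

Lemma hwow_b_ex (g : H) : (exists n, has_word_of_weight g n) -> exists n, hwow_b g n.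
Proof.
case=> n hn; exists n; rewrite /hwow_b.
by case: (excluded_middle_informative (has_word_of_weight g n)).
Qed.

(* L(g) = min { sum_i f(x_i) : g = x_1^{+-1} ... x_r^{+-1}, x_i in S }
   (set to 0 if g is not a word in S, which never happens when S
   generates). *)
Definition word_length (g : H) : nat :=
  match excluded_middle_informative (exists n, has_word_of_weight g n) with
  | left e => ex_minn (hwow_b_ex e)
  | right _ => 0%N
  end.

End WordLength.

(* An n-simplex of EH is an (n+1)-tuple (x_0,...,x_n) of elements.     *)
Section BarComplex.
Variable H : groupType.

Definition simplex (n : nat) := {ffun 'I_n.+1 -> H}.

Definition face (n : nat) (i : 'I_n.+2) (s : simplex n.+1) : simplex n :=
  [ffun j => s (lift i j)].

Definition sact (n : nat) (g : H) (s : simplex n) : simplex n :=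
  [ffun j => (g * s j)%g].

(* rational n-chains of EH, as finite formal sums *)
Definition chain (n : nat) := seq (rat * simplex n).

Definition coef (n : nat) (c : chain n) (s : simplex n) : rat :=
  (\sum_(p <- c | p.2 == s) p.1)%R.

Definition bnd (n : nat) (c : chain n.+1) : chain n :=
  flatten [seq [seq (((-1) ^+ (nat_of_ord i) * p.1)%R, face i p.2)
                | i : 'I_n.+2 <- enum 'I_n.+2]
          | p : rat * simplex n.+1 <- c].

(* equality in the coinvariants C_n(EH;Q) (x)_H Q: c - c' is a finite
   rational combination of elements g.s - s *)
Definition coinv_eq (n : nat) (c c' : chain n) : Prop :=
  exists r : seq (rat * H * simplex n), forall s : simplex n,
    (coef c s - coef c' s =
     \sum_(p <- r) p.1.1 * ((sact p.1.2 p.2 == s)%:R - (p.2 == s)%:R))%R.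

Definition is_cycle (n : nat) : chain n -> Prop :=
  match n return chain n -> Prop with
  | 0 => fun _ => True
  | m.+1 => fun c => coinv_eq (bnd c) [::]
  end.

Definition is_boundary (n : nat) (c : chain n) : Prop :=
  exists d : chain n.+1, coinv_eq c (bnd d).

Definition equivariant (n : nat) (psi : simplex n -> rat) : Prop :=
  forall (g : H) (s : simplex n), psi (sact g s) = psi s.

Definition is_cocycle (n : nat) (psi : simplex n -> rat) : Prop :=
  forall s : simplex n.+1, (\sum_(i < n.+2) (-1) ^+ i * psi (face i s))%R = 0%R.

Definition poly_bounded (L : H -> nat) (n : nat) (psi : simplex n -> rat) : Prop :=
  exists (C : rat) (k : nat), forall s : simplex n, s ord0 = 1%g ->
    (`|psi s| <= C * (1 + (\sum_(j < n.+1 | j != ord0) L (s j))%:R) ^+ k)%R.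

Definition pairing (n : nat) (psi : simplex n -> rat) (c : chain n) : rat :=
  (\sum_(p <- c) p.1 * psi p.2)%R.

(* alpha_n(H,L) : H_n(H;Q) -> (H^n(H;Q))^* -> (PH^n(H;Q))^* is injective:
   a class [c] is sent to [psi] |-> <psi, c>; it vanishes iff <psi,c> = 0
   for every polynomially bounded equivariant cocycle psi, and then
   [c] must be 0 in H_n, i.e. c is a boundary. *)
Definition alpha_injective (L : H -> nat) (n : nat) : Prop :=
  forall c : chain n, is_cycle c ->
    (forall psi : simplex n -> rat,
        equivariant psi -> is_cocycle psi -> poly_bounded L psi ->
        pairing psi c = 0%R) ->
    is_boundary c.

End BarComplex.

(* Main.v *)
Require Import Defs.
From mathcomp Require Import all_boot all_order all_algebra.
From mathcomp Require Import ring.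
From Stdlib Require Import ClassicalDescription ClassicalEpsilon.
Set Implicit Arguments. Unset Strict Implicit. Unset Printing Implicit Defensive.
Import Order.TTheory GRing.Theory Num.Theory.

Section Chains.
Variable H : groupType.
Local Open Scope ring_scope.

Definition delta n (t s : simplex H n) : rat := (t == s)%:R.

Definition rsum n (r : seq (rat * H * simplex H n)) (s : simplex H n) : rat :=
  \sum_(p <- r) p.1.1 * ((sact p.1.2 p.2 == s)%:R - (p.2 == s)%:R).

Lemma coefE n (c : chain H n) s : coef c s = \sum_(p <- c) p.1 * (p.2 == s)%:R.
Proof.
rewrite /coef big_mkcond /=; apply: eq_bigr => p _.
by case: eqP => _; rewrite ?mulr1 ?mulr0.
Qed.

Lemma coef_bnd n (d : chain H n.+1) s :
  coef (bnd d) s = \sum_(p <- d) \sum_(i < n.+2) (-1) ^+ i * p.1 * (face i p.2 == s)%:R.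
Proof.
rewrite coefE /bnd big_flatten big_map /=; apply: eq_bigr => p _.
by rewrite big_map big_enum /=.
Qed.

Definition Bf (F : simplex H 1 -> rat) :=
  exists (d : chain H 2) (r : seq (rat * H * simplex H 1)),
    forall s, F s = coef (bnd d) s + rsum r s.

Lemma Bf_ext F F' : (forall s, F s = F' s) -> Bf F -> Bf F'.
Proof. by move=> e [d [r h]]; exists d, r => s; rewrite -e. Qed.

Lemma Bf0 : Bf (fun _ => 0).
Proof. by exists [::], [::] => s; rewrite coef_bnd /rsum !big_nil addr0. Qed.

Lemma coef_bnd_cat (d d' : chain H 2) s :
  coef (bnd (d ++ d')) s = coef (bnd d) s + coef (bnd d') s.
Proof. by rewrite !coef_bnd big_cat. Qed.

Lemma coef_bnd_scale a (d : chain H 2) s :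
  coef (bnd (map (fun p => (a * p.1, p.2)) d)) s = a * coef (bnd d) s.
Proof.
rewrite !coef_bnd big_map mulr_sumr; apply: eq_bigr => p _.
rewrite mulr_sumr; apply: eq_bigr => i _ /=; ring.
Qed.

Lemma rsum_cat (r r' : seq (rat * H * simplex H 1)) s :
  rsum (r ++ r') s = rsum r s + rsum r' s.
Proof. by rewrite /rsum big_cat. Qed.

Lemma rsum_scale a (r : seq (rat * H * simplex H 1)) s :
  rsum (map (fun p => ((a * p.1.1, p.1.2), p.2)) r) s = a * rsum r s.
Proof.
rewrite /rsum big_map mulr_sumr; apply: eq_bigr => p _ /=; ring.
Qed.

Lemma Bf_lin a b F G : Bf F -> Bf G -> Bf (fun s => a * F s + b * G s).
Proof.
move=> [d [r h]] [d' [r' h']].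
exists (map (fun p => (a * p.1, p.2)) d ++ map (fun p => (b * p.1, p.2)) d').
exists (map (fun p => ((a * p.1.1, p.1.2), p.2)) r ++ map (fun p => ((b * p.1.1, p.1.2), p.2)) r').
move=> s; rewrite h h' coef_bnd_cat rsum_cat !coef_bnd_scale !rsum_scale; ring.
Qed.

Lemma Bf_act q g t : Bf (fun s => q * (delta (sact g t) s - delta t s)).
Proof.
exists [::], [:: ((q, g), t)] => s; rewrite coef_bnd /rsum big_nil big_seq1 /=.
by rewrite add0r.
Qed.

Lemma Bf_bnd (t : simplex H 2) : Bf (fun s => \sum_(i < 3) (-1) ^+ i * delta (face i t) s).
Proof.
exists [:: (1, t)], [::] => s; rewrite coef_bnd /rsum big_nil big_seq1 addr0 /=.
by apply: eq_bigr => i _; rewrite mulr1.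
Qed.

Lemma Bf_sum (T : Type) (l : seq T) (F : T -> simplex H 1 -> rat) :
  (forall x, Bf (F x)) -> Bf (fun s => \sum_(x <- l) F x s).
Proof.
move=> hF; elim: l => [|x l IH].
  by apply: Bf_ext Bf0 => s; rewrite big_nil.
apply: Bf_ext (Bf_lin 1 1 (hF x) IH) => s; rewrite big_cons !mul1r.
by [].
Qed.

Local Open Scope group_scope.
Definition mk2 (a b : H) : simplex H 1 := [ffun i : 'I_2 => if val i == 0%N then a else b].
Definition e (g : H) := delta (mk2 1 g).

Lemma simplex1E (t : simplex H 1) : t = mk2 (t ord0) (t ord_max).
Proof.
apply/ffunP => i; rewrite ffunE; case: i => [[|[|k]] hk] //=.
- by congr (t _); apply: val_inj.
- by congr (t _); apply: val_inj.
Qed.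

Lemma faceE (t : simplex H 2) (i : 'I_3) :
  face i t = mk2 (t (lift i ord0)) (t (lift i ord_max)).
Proof. by rewrite [face i t]simplex1E !ffunE. Qed.

Local Close Scope group_scope.

Lemma F1 (t : simplex H 1) :
  Bf (fun s => delta t s - e ((t ord0)^-1 * t ord_max)%g s).
Proof.
apply: Bf_ext (Bf_act (-1) (t ord0)^-1%g t) => s.
have -> : sact (t ord0)^-1 t = mk2 1 ((t ord0)^-1 * t ord_max).
  apply/ffunP => i; rewrite !ffunE; case: i => [[|[|k]] hk] //=.
  - by rewrite (_ : Ordinal hk = ord0) ?mulVg //; apply: val_inj.
  - by congr (_ * t _)%g; apply: val_inj.
rewrite /e; ring.
Qed.

Lemma F2 (a b : H) : Bf (fun s => e a s + e b s - e (a * b)%g s).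
Proof.
pose t : simplex H 2 := [ffun i : 'I_3 => if val i == 0%N then 1%g else if val i == 1%N then a else (a * b)%g].
have h1 := Bf_bnd t.
have h2 := F1 (mk2 a (a * b)%g).
apply: Bf_ext (Bf_lin 1 (-1) h1 h2) => s.
rewrite !big_ord_recl big_ord0 !faceE !ffunE /= /bump /=.
rewrite /e mulKg; ring.
Qed.

Lemma eval_cat (w w' : seq (H * bool)) : word_eval (w ++ w') = (word_eval w * word_eval w')%g.
Proof. by elim: w => [|p w IH] /=; rewrite ?mul1g // IH mulgA. Qed.

Lemma e1 : Bf (e 1%g).
Proof. by apply: Bf_ext (F2 1%g 1%g) => s; rewrite mulg1; ring. Qed.

Lemma einv x : Bf (fun s => e x^-1%g s + e x s).
Proof.
apply: Bf_ext (Bf_lin 1 1 (F2 x x^-1%g) e1) => s; rewrite mulgV; ring.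
Qed.

Definition sgn (b : bool) : rat := if b then 1 else -1.

Lemma eletter x (b : bool) : Bf (fun s => e (if b then x else x^-1)%g s - sgn b * e x s).
Proof.
case: b => /=.
  by apply: Bf_ext Bf0 => s; ring.
by apply: Bf_ext (einv x) => s; ring.
Qed.

Definition Ew (w : seq (H * bool)) s := \sum_(p <- w) sgn p.2 * e p.1 s.

Lemma eval_E w : Bf (fun s => e (word_eval w) s - Ew w s).
Proof.
elim: w => [|p w IH].
  by apply: Bf_ext e1 => s; rewrite /Ew big_nil subr0.
have h := Bf_lin (-1) 1 (F2 (if p.2 then p.1 else p.1^-1)%g (word_eval w)) (Bf_lin 1 1 (eletter p.1 p.2) IH).
apply: Bf_ext h => s; rewrite /Ew big_cons /=; ring.
Qed.

Section Coord.
Variable ts : seq H.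

Definition coord (w : seq (H * bool)) : 'rV[rat]_(size ts) :=
  \row_l \sum_(p <- w) sgn p.2 * (index p.1 ts == l)%:R.

Definition Eu (u : 'rV[rat]_(size ts)) s := \sum_(l < size ts) u 0 l * e (nth 1%g ts l) s.

Lemma Eu_lin a b u v s : Eu (a *: u + b *: v) s = a * Eu u s + b * Eu v s.
Proof.
rewrite /Eu !mulr_sumr.
transitivity (\sum_(l < size ts) (a * (u 0 l * e (nth 1%g ts l) s) + b * (v 0 l * e (nth 1%g ts l) s))).
  by apply: eq_bigr => l _; rewrite !mxE; ring.
by rewrite big_split.
Qed.

Lemma E_coord w : (forall p, List.In p w -> p.1 \in ts) -> forall s, Eu (coord w) s = Ew w s.
Proof.
elim: w => [|p w IH] hw s.
  by rewrite /Eu /Ew big_nil big1 // => l _; rewrite mxE big_nil mul0r.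
rewrite /Ew big_cons -/(Ew w s) -IH; last by move=> q hq; apply: hw; right.
have hp : p.1 \in ts by apply: hw; left.
transitivity (\sum_(l < size ts) (sgn p.2 * (index p.1 ts == l)%:R * e (nth 1%g ts l) s
    + coord w 0 l * e (nth 1%g ts l) s)).
  by apply: eq_bigr => l _; rewrite !mxE big_cons; ring.
rewrite big_split /=; congr (_ + _).
rewrite (bigD1 (Ordinal (etrans (index_mem p.1 ts) hp))) //=.
rewrite eqxx nth_index // big1 ?addr0; first by rewrite mulr1.
move=> l hl.
have -> : (index p.1 ts == l) = false.
  by apply/negbTE; apply: contra hl => /eqP hl; apply/eqP/val_inj.
by rewrite mulr0 mul0r.
Qed.

Definition Good (u : 'rV[rat]_(size ts)) := Bf (Eu u).

Lemma Good_lin a b u v : Good u -> Good v -> Good (a *: u + b *: v).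
Proof. by move=> hu hv; apply: Bf_ext (Bf_lin a b hu hv) => s; rewrite Eu_lin. Qed.

Lemma Good0 : Good 0.
Proof. by apply: Bf_ext Bf0 => s; rewrite /Eu big1 // => l _; rewrite mxE mul0r. Qed.

Lemma GoodD u v : Good u -> Good v -> Good (u + v).
Proof. by move=> hu hv; have := Good_lin 1 1 hu hv; rewrite !scale1r. Qed.

Lemma GoodZ a u : Good u -> Good (a *: u).
Proof. by move=> hu; have := Good_lin a 0 hu Good0; rewrite scaler0 addr0. Qed.

Lemma Good_sub k (M : 'M[rat]_(k, size ts)) u :
  (forall i, Good (row i M)) -> (u <= M)%MS -> Good u.
Proof.
move=> hM /submxP [D ->]; rewrite mulmx_sum_row.
by apply: (big_ind Good Good0 GoodD) => i _; apply: GoodZ.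
Qed.

Lemma coord_cat w w' : coord (w ++ w') = coord w + coord w'.
Proof. by apply/rowP => l; rewrite !mxE big_cat. Qed.

Lemma Good_K w w' : (forall p, List.In p w -> p.1 \in ts) ->
  (forall p, List.In p w' -> p.1 \in ts) -> word_eval w = word_eval w' ->
  Good (coord w - coord w').
Proof.
move=> hw hw' he.
have h := Bf_lin (-1) 1 (eval_E w) (eval_E w').
apply: Bf_ext h => s.
have -> : coord w - coord w' = 1 *: coord w + (-1) *: coord w' by rewrite scale1r scaleN1r.
rewrite Eu_lin !E_coord // he; ring.
Qed.

Lemma Eu_sumZ (T : Type) (c : seq T) (a : T -> rat) (X : T -> 'rV[rat]_(size ts)) s :
  Eu (\sum_(p <- c) a p *: X p) s = \sum_(p <- c) a p * Eu (X p) s.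
Proof.
elim: c => [|p c IH].
  by rewrite !big_nil /Eu big1 // => l _; rewrite mxE mul0r.
rewrite !big_cons -[X in Eu (_ + X)]scale1r Eu_lin IH; ring.
Qed.

Lemma coord_bound w (v : 'cV[rat]_(size ts)) :
  `|(coord w *m v) 0 0| <= (size w)%:R * \sum_l `|v l 0|.
Proof.
elim: w => [|p w IH].
  rewrite mul0r (_ : coord [::] = 0) ?mul0mx ?mxE //.
  by apply/rowP => l; rewrite !mxE big_nil.
rewrite (_ : p :: w = [:: p] ++ w) // coord_cat mulmxDl mxE.
apply: le_trans (ler_normD _ _) _.
rewrite (_ : (size ([:: p] ++ w))%:R = (size w)%:R + 1 :> rat); last first.
  by rewrite /= -[in LHS]addn1 natrD.
rewrite mulrDl addrC lerD //.
rewrite mul1r mxE; apply: le_trans (ler_norm_sum _ _ _) _.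
apply: ler_sum => l _; rewrite mxE big_seq1 !normrM.
rewrite -[X in _ <= X]mul1r ler_wpM2r //.
have h1 : `|sgn p.2| = 1 by case: p.2; rewrite /sgn ?normrN normr1.
rewrite h1 mul1r; by case: (_ == _); rewrite ?normr1 ?normr0.
Qed.

End Coord.

End Chains.

Section Main.
Variable H : groupType.
Variable ts : seq H.
Local Open Scope ring_scope.

Definition Sts (x : H) : Prop := x \in ts.
Definition f1 (x : H) : nat := 1%N.
Definition gp (t : simplex H 1) : H := ((t ord0)^-1 * t ord_max)%g.

Hypothesis gen : generates Sts.

Lemma weight1 (w : seq (H * bool)) : word_weight f1 w = size w.
Proof. by rewrite /word_weight; elim: w => //= p w ->. Qed.

Lemma min_word g : exists w, [/\ is_word Sts w, word_eval w = g & size w = word_length Sts f1 g].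
Proof.
rewrite /word_length; destruct (ClassicalDescription.excluded_middle_informative (exists n, has_word_of_weight Sts f1 g n)) as [ex|nex].
  case: (ex_minnP (hwow_b_ex ex)) => n hn _; move: hn; rewrite /hwow_b.
  destruct (ClassicalDescription.excluded_middle_informative (has_word_of_weight Sts f1 g n)) as [[w [hw he hwt]]|] => //= _.
  by exists w; split => //; rewrite -hwt weight1.
exfalso; apply: nex; case: (gen g) => w [hw he]; exists (word_weight f1 w), w; by split.
Qed.

Lemma face_val (s : simplex H 2) (i : 'I_3) :
  face i s = mk2 (s (inord (if val i == 0%N then 1 else 0)))
                 (s (inord (if val i == 2%N then 1 else 2))).
Proof.
apply/ffunP => j; rewrite !ffunE.
case: i => [[|[|[|k]]] hi]; case: j => [[|[|k']] hj] //=; congr (s _); apply: val_inj => /=;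
  by rewrite inordK.
Qed.

Lemma main_alpha : alpha_injective (word_length Sts f1) 1.
Proof.
move=> c _ hyp.
have wdP : forall g : H, {w | is_word Sts w /\ word_eval w = g}.
  by move=> g; apply: constructive_indefinite_description; apply: gen.
pose wd g := sval (wdP g).
have wd_word g : is_word Sts (wd g) := (svalP (wdP g)).1.
have wd_eval g : word_eval (wd g) = g := (svalP (wdP g)).2.
pose P n := exists A : 'M[rat]_(size ts), (forall i, Good (row i A)) /\ \rank A = n.
pose Pb : pred nat := fun n => is_left (excluded_middle_informative (P n)).
have PbP n : Pb n <-> P n.
  by rewrite /Pb; case: excluded_middle_informative.
have exP : exists n, Pb n.
  exists 0%N; apply/PbP; exists 0; split; last exact: mxrank0.
  by move=> i; rewrite row0; exact: Good0.
have ubP : forall n, Pb n -> (n <= size ts)%N.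
  by move=> n /PbP [A [_ <-]]; exact: rank_leq_col.
case: (ex_maxnP exP ubP) => n0 /PbP [A [hA hrk]] hmax.
have maxA : forall k : 'rV[rat]_(size ts), Good k -> (k <= A)%MS.
  move=> k hk; apply/negPn/negP => hnk.
  have hk1 : forall i, Good (row i k).
    by move=> i; have -> : row i k = k by apply/rowP => j; rewrite mxE (ord1 i).
  have hA2 : forall i, Good (row i (A + k)%MS).
    move=> i; have /sub_addsmxP [[u1 u2] /= ->] := row_sub i (A + k)%MS.
    by apply: GoodD; [apply: (Good_sub hA (submxMl _ _)) | apply: (Good_sub hk1 (submxMl _ _))].
  have hlt : (\rank A < \rank (A + k)%MS)%N.
    by rewrite (ltn_leqif (mxrank_leqif_sup (addsmxSl A k))) addsmx_sub submx_refl /=.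
  have := hmax (\rank (A + k)%MS).
  move=> h; have := h (proj2 (PbP _) (ex_intro _ (A + k)%MS (conj hA2 erefl))).
  by rewrite -hrk leqNgt hlt.
have inA : forall w w', is_word Sts w -> is_word Sts w' -> word_eval w = word_eval w' ->
    ((coord ts w - coord ts w') *m cokermx A) = 0.
  move=> w w' hw hw' he; apply/eqP; rewrite -submxE; apply: maxA; exact: Good_K.
pose u := \sum_(p <- c) p.1 *: coord ts (wd (gp p.2)).
have hu : (u <= A)%MS.
  rewrite submxE; apply/eqP/rowP => j; rewrite [RHS]mxE.
  pose v := col j (cokermx A).
  have colE (X : 'rV[rat]_(size ts)) : (X *m cokermx A) 0 j = (X *m v) 0 0.
    by rewrite !mxE; apply: eq_bigr => l _; rewrite !mxE.
  pose phi g := (coord ts (wd g) *m v) 0 0.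
  have phiw : forall w, is_word Sts w -> phi (word_eval w) = (coord ts w *m v) 0 0.
    move=> w hw; have := inA _ _ (wd_word (word_eval w)) hw (wd_eval _).
    rewrite mulmxBl => /subr0_eq hh.
    have hh2 := congr1 (fun M : 'rV[rat]_(size ts) => M 0 j) hh.
    move: hh2 => /=. rewrite (colE (coord ts (wd (word_eval w)))) (colE (coord ts w)).
    by [].
  have phiM : forall g h, phi (g * h)%g = phi g + phi h.
    move=> g h; rewrite -{1}(wd_eval g) -{1}(wd_eval h) -eval_cat phiw.
      by rewrite coord_cat mulmxDl mxE.
    move=> p hp; case: (List.in_app_or _ _ _ hp) => hp'; [exact: (wd_word g) | exact: (wd_word h)].
  have := hyp (fun t => phi (gp t)).
  have hpair : pairing (fun t => phi (gp t)) c = (u *m v) 0 0.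
    rewrite /pairing /u mulmx_suml summxE; apply: eq_bigr => p _.
    by rewrite -scalemxAl mxE.
  rewrite hpair colE; apply.
  - by move=> g t; rewrite /gp !ffunE invgM -mulgA mulKg.
  - move=> s; rewrite !big_ord_recl big_ord0 !face_val /gp !ffunE /=.
    have -> : phi ((s (inord 0))^-1 * s (inord 2))%g =
              phi ((s (inord 0))^-1 * s (inord 1))%g + phi ((s (inord 1))^-1 * s (inord 2))%g.
      by rewrite -phiM -mulgA mulVKg.
    rewrite !expr0 !expr1 expr2; ring.
  - exists (\sum_l `|v l 0|), 1%N => t ht.
    rewrite expr1 /gp ht invg1 mul1g.
    case: (min_word (t ord_max)) => w [hw he hsz].
    rewrite -he phiw //; apply: le_trans (coord_bound w v) _.
    rewrite mulrC ler_wpM2l //; first by apply: sumr_ge0 => l _; exact: normr_ge0.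
    rewrite addrC natr1 ler_nat hsz; apply: leq_trans (leqnSn _).
    by rewrite (bigD1 ord_max) //=; exact: leq_addr.
have hGood : Good u := Good_sub hA hu.
have hev g : Bf (fun s => e g s - Ew (wd g) s).
  by have := eval_E (wd g); rewrite wd_eval.
have hB : Bf (fun s => coef c s - Eu u s).
  apply: Bf_ext (Bf_sum c (F := fun p s => p.1 * ((delta p.2 s - e (gp p.2) s) +
     (e (gp p.2) s - Ew (wd (gp p.2)) s))) _) => [s|p].
    rewrite coefE /u Eu_sumZ -sumrB; apply: eq_bigr => p _.
    rewrite E_coord; last exact: wd_word.
    rewrite /delta; ring.
  have hh := Bf_lin p.1 0 (Bf_lin 1 1 (F1 p.2) (hev (gp p.2))) (Bf0 H).
  apply: (Bf_ext _ hh) => s /=.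
  rewrite /gp; ring.
case: (Bf_lin 1 1 hB hGood) => d [r h]; exists d, r => s.
rewrite -[RHS]/(rsum r s).
apply/eqP; rewrite subr_eq; apply/eqP; rewrite addrC -h; ring.
Qed.

End Main.

Section Final.
Local Open Scope group_scope.

Lemma gen_from (G : groupType) (hG : abelianization_fg G)
  (Gbar : groupType) (pi : G -> Gbar) (hpi : is_Gab_mod_torsion pi) :
  exists ts : seq Gbar, generates (Sts ts).
Proof.
case: hpi => hM hsurj hker.
case: hG => s hs.
have pi1 : pi 1 = 1.
  by apply: (@mulgI _ (pi 1)); rewrite -hM !mulg1.
have piV x : pi x^-1 = (pi x)^-1.
  by apply: (@mulgI _ (pi x)); rewrite -hM !mulgV.
have picomm g : in_commutator_subgroup g -> pi g = 1.
  by move=> hg; apply/hker; exists 1%N; rewrite expg1.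
exists (map pi s) => y.
case: (hsurj y) => x <-.
case: (hs x) => w0 [hw0 hc].
pose letter (z : G) := if z \in s then (pi z, true) else (pi z^-1, false).
exists (map letter w0); split.
  move=> p; elim: w0 hw0 {hc} => [|z w0 IH] //= /andP [hz hw0] [<-|hp]; last exact: IH.
  rewrite /letter; case: ifP => hzs /=; first exact: map_f.
  by move: hz; rewrite hzs /= => hz; exact: map_f.
have he : word_eval (map letter w0) = pi (gprod w0).
  elim: w0 {hw0 hc} => [|z w0 IH] /=; first by rewrite pi1.
  rewrite hM IH /letter; case: (z \in s) => //=.
  by rewrite piV invgK.
have := picomm _ hc; rewrite hM piV => h1.
by rewrite he -(mulgVK (pi (gprod w0)) (pi x)) h1 mul1g.
Qed.

End Final.

Theorem lemma1p4p1 (G : groupType) (hG : abelianization_fg G)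
  (Gbar : groupType) (pi : G -> Gbar) (hpi : is_Gab_mod_torsion pi) :
  exists (S : Gbar -> Prop) (f : Gbar -> nat),
    [/\ generates S, positive_weights S f &
        alpha_injective (word_length S f) 1].
Proof.
case: (gen_from hG hpi) => ts hts.
exists (Sts ts), (@f1 Gbar); split => //.
exact: main_alpha.
Qed.
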